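(* Let $F:\mathbb{R}^p\to\mathbb{R}$ be bounded from below by a constant $F_{l.b.}$, i.e. $F(x)\ge F_{l.b.}$ for all $x\in\mathbb{R}^p$, and suppose that the gradient $\dot F(x)=\nabla F(x)$ exists for every $x\in\mathbb{R}^p$ and that $\dot F$ is locally Lipschitz continuous on $\mathbb{R}^p$. Let $x_0\in\mathbb{R}^p$, let $\{M_k: k\ge 0\}\subset\mathbb{R}^{p\times p}$ be symmetric positive definite matrices, and define $x_{k+1}=x_k-M_k\dot F(x_k)$ for $k\ge 0$. Then for every $R\ge 0$ there exists a constant $C_R>0$ such that for all $k\ge 0$, $$[F(x_{k+1})-F_{l.b.}]\,\chi_{k+1}^0(R)\le \Big[F(x_k)-F_{l.b.}-\dot F(x_k)^\intercal M_k\dot F(x_k)+C_R\|M_k\dot F(x_k)\|_2^2\Big]\chi_k^0(R).$$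
   Context: For $R>0$ (or $R\ge 0$), $z\in\mathbb{R}^p$ and $k\ge 0$, $\chi_k^z(R)$ equals $1$ if $\|x_j-z\|_2\le R$ for all $0\le j\le k$, and equals $0$ otherwise. In particular $\chi_k^0(R)=1$ iff $\|x_j\|_2\le R$ for all $j\le k$. *)

(* Defs.v *)
From HB Require Import structures.
From mathcomp Require Import all_boot all_order all_algebra.
From mathcomp Require Import all_classical all_reals all_analysis.
Set Implicit Arguments. Unset Strict Implicit. Unset Printing Implicit Defensive.
Import Order.TTheory GRing.Theory Num.Theory.
Import numFieldNormedType.Exports.
Local Open Scope ring_scope.

Definition dotv (R : realType) (p : nat) (u v : 'rV[R]_p) : R :=
  \sum_(i < p) u 0 i * v 0 i.

Definition norm2 (R : realType) (p : nat) (v : 'rV[R]_p) : R :=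
  Num.sqrt (\sum_(i < p) v 0 i ^+ 2).

Definition is_gradient (R : realType) (p : nat)
    (F : 'rV[R]_p -> R) (G : 'rV[R]_p -> 'rV[R]_p) : Prop :=
  forall x : 'rV[R]_p, differentiable F x /\ forall v, 'd F x v = dotv (G x) v.

Definition locally_lipschitz (R : realType) (p : nat)
    (G : 'rV[R]_p -> 'rV[R]_p) : Prop :=
  forall x : 'rV[R]_p, exists r : R, 0 < r /\ exists L : R,
    forall y z : 'rV[R]_p, norm2 (y - x) < r -> norm2 (z - x) < r ->
      norm2 (G y - G z) <= L * norm2 (y - z).

Definition spd (R : realType) (p : nat) (M : 'M[R]_p) : Prop :=
  M^T = M /\ forall v : 'rV[R]_p, v != 0 -> 0 < (v *m M *m v^T) 0 0.

Definition chi (R : realType) (p : nat) (x : nat -> 'rV[R]_p)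
    (k : nat) (z : 'rV[R]_p) (Rad : R) : R :=
  if [forall j : 'I_k.+1, norm2 (x j - z) <= Rad] then 1 else 0.

(* Main.v *)
Require Import Defs.
From HB Require Import structures.
From mathcomp Require Import all_boot all_order all_algebra.
From mathcomp Require Import all_classical all_reals all_analysis.
From mathcomp Require Import ring lra finmap.
Set Implicit Arguments. Unset Strict Implicit. Unset Printing Implicit Defensive.
Import Order.TTheory GRing.Theory Num.Theory.
Import numFieldNormedType.Exports.
Local Open Scope ring_scope.

Section Basics.
Variables (R : realType) (p : nat).
Implicit Types (u v w : 'rV[R]_p).

Definition nsq v : R := \sum_(i < p) v 0 i ^+ 2.

Lemma nsq_ge0 v : 0 <= nsq v.
Proof. by apply: sumr_ge0 => i _; rewrite sqr_ge0. Qed.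

Lemma norm2_sq v : norm2 v ^+ 2 = nsq v.
Proof. by rewrite /norm2 sqr_sqrtr // nsq_ge0. Qed.

Lemma norm2_ge0 v : 0 <= norm2 v.
Proof. exact: sqrtr_ge0. Qed.

Lemma dot_amgm (a : R) u v : 0 < a ->
  dotv u v <= (2 * a)^-1 * nsq u + a / 2 * nsq v.
Proof.
move=> a0; rewrite /dotv /nsq !mulr_sumr -big_split /=.
apply: ler_sum => i _.
set x := u 0 i; set y := v 0 i.
have h : 0 <= (x - a * y) ^+ 2 / (2 * a) by rewrite divr_ge0 ?sqr_ge0 // mulr_ge0 // ltW.
have e : (x - a * y) ^+ 2 / (2 * a) = (2 * a)^-1 * x ^+ 2 + a / 2 * y ^+ 2 - x * y.
  by field; rewrite gt_eqF.
by move: h; rewrite e subr_ge0.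
Qed.

Lemma dotvC u v : dotv u v = dotv v u.
Proof. by apply: eq_bigr => i _; rewrite mulrC. Qed.

Lemma dotvBl u w v : dotv (u - w) v = dotv u v - dotv w v.
Proof. by rewrite /dotv -sumrB; apply: eq_bigr => i _; rewrite !mxE mulrBl. Qed.

Lemma dotvNr u v : dotv u (- v) = - dotv u v.
Proof. by rewrite /dotv -sumrN; apply: eq_bigr => i _; rewrite !mxE mulrN. Qed.

Lemma dotvZr (s : R) u v : dotv u (s *: v) = s * dotv u v.
Proof. by rewrite /dotv mulr_sumr; apply: eq_bigr => i _; rewrite !mxE mulrCA. Qed.

Lemma nsqZ (s : R) v : nsq (s *: v) = s ^+ 2 * nsq v.
Proof. by rewrite /nsq mulr_sumr; apply: eq_bigr => i _; rewrite !mxE exprMn. Qed.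

Lemma nsqN v : nsq (- v) = nsq v.
Proof. by apply: eq_bigr => i _; rewrite !mxE sqrrN. Qed.

Lemma nsqD u v : nsq (u + v) <= 2 * nsq u + 2 * nsq v.
Proof.
rewrite /nsq !mulr_sumr -big_split /=; apply: ler_sum => i _; rewrite !mxE.
have := sqr_ge0 (u 0 i - v 0 i); nra.
Qed.

Lemma entry_le_mxnorm v i : `|v 0 i| <= `|v|.
Proof.
change (`|v 0 i| <= mx_norm v); rewrite mx_normrE; apply/bigmax_geP; right => /=.
by exists (0, i).
Qed.

Lemma mxnorm_le_norm2 v : `|v| <= norm2 v.
Proof.
change (mx_norm v <= norm2 v); rewrite mx_normrE; apply/bigmax_leP; split => [|[i j] _] /=.
  exact: norm2_ge0.
rewrite (ord1 i) -(ger0_norm (norm2_ge0 v)) -ler_sqr ?nnegrE // ?normr_ge0 //.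
rewrite ger0_norm ?norm2_ge0 // norm2_sq /nsq real_normK ?num_real //.
rewrite (bigD1 j) //= lerDl; apply: sumr_ge0 => k _; rewrite sqr_ge0 //.
Qed.

Lemma norm2_le_mxnorm v : norm2 v <= (p%:R + 1) * `|v|.
Proof.
have m0 : 0 <= `|v| by [].
rewrite -(ger0_norm (norm2_ge0 v)) -[leRHS]ger0_norm ?mulr_ge0 ?addr_ge0 //.
rewrite -ler_sqr ?nnegrE // ?normr_ge0 // !real_normK ?num_real //.
rewrite norm2_sq /nsq.
apply: (@le_trans _ _ (\sum_(i < p) `|v|^+2)).
  apply: ler_sum => i _; rewrite -real_normK ?num_real //.
  by rewrite lerXn2r ?nnegrE // entry_le_mxnorm.
rewrite sumr_const card_ord -mulr_natr exprMn mulrC.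
have h1 : p%:R <= (p%:R + 1) ^+ 2 :> R.
  have h0 : 0 <= p%:R :> R by [].
  nra.
rewrite -mulr_natr mul1r; have h2 : 0 <= `|v| ^+ 2 by rewrite sqr_ge0.
nra.
Qed.


Lemma sq_le (a b : R) : 0 <= a -> a <= b -> a ^+ 2 <= b ^+ 2.
Proof. by move=> a0 ab; rewrite lerXn2r // nnegrE (le_trans a0). Qed.

Lemma le_sum_seq (T : eqType) (s : seq T) (F : T -> R) c :
  (forall i, 0 <= F i) -> c \in s -> F c <= \sum_(i <- s) F i.
Proof.
move=> F0; elim: s => // a s IH; rewrite inE big_cons => /orP[/eqP->|cs].
  by rewrite lerDl sumr_ge0.
by rewrite (le_trans (IH cs)) // lerDr.
Qed.

Lemma cover_lemma (G : 'rV[R]_p -> 'rV[R]_p) (R1 : R) : locally_lipschitz G ->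
  exists d, 0 < d /\ exists L, 0 <= L /\ exists Gm, 0 <= Gm /\
   (forall y z, `|y| <= R1 -> `|z - y| < d -> nsq (G z - G y) <= L * nsq (z - y)) /\
   (forall y, `|y| <= R1 -> nsq (G y) <= Gm).
Proof.
move=> hG.
have [r hr] := choice hG.
have [Lf hL] := choice (fun x => (hr x).2).
have r0 : forall c, 0 < r c by move=> c; exact: (hr c).1.
set k : R := p%:R + 1.
have k0 : 0 < k by rewrite /k ltr_wpDl.
set A := [set y : 'rV[R]_p | `|y| <= R1]%classic.
have Acl : closed A.
  have -> : A = closed_ball_ Num.Def.normr 0 R1.
    by apply/funext => y; rewrite /A /closed_ball_ /= distrC subr0.
  exact: closed_closed_ball_.
have Abd : [bounded y | y in A].
  rewrite /bounded_near; near=> M => y Ay /=; apply: (le_trans Ay).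
  near: M; apply: nbhs_pinfty_ge; exact: num_real.
have Acp : compact A by exact: bounded_closed_compact.
rewrite compact_cover in Acp.
have h1 : forall c, A c -> open (ball c (r c / (2 * k))).
  by move=> c _; exact: ball_open.
have h2 : (A `<=` cover A (fun c => ball c (r c / (2 * k))))%classic.
  move=> y Ay; exists y => //; apply: ballxx; rewrite divr_gt0 ?mulr_gt0 //.
have [D' _ hcov] := Acp _ A _ h1 h2.
set d := (\sum_(c <- D') (2 * k / r c) + 1)^-1.
have d0 : 0 < d.
  by rewrite /d invr_gt0 ltr_wpDl // sumr_ge0 // => c _; rewrite divr_ge0 ?mulr_ge0 // ltW.
exists d; split => //.
exists (\sum_(c <- D') Lf c ^+ 2); split; first by apply: sumr_ge0 => c _; rewrite sqr_ge0.
exists (\sum_(c <- D') (2 * nsq (G c) + 2 * (Lf c ^+ 2 * r c ^+ 2))); split.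
  apply: sumr_ge0 => c _; have := nsq_ge0 (G c); have := sqr_ge0 (Lf c); have := sqr_ge0 (r c); nra.
have key : forall y, `|y| <= R1 -> exists c, [/\ c \in D', `|c - y| < r c / (2 * k)
    & d <= r c / (2 * k)].
  move=> y /hcov [c cD cy]; exists c; split => //.
    by move: cy; rewrite -ball_normE.
  rewrite /d -[r c / (2 * k)]invrK invf_div lef_pV2 ?posrE ?divr_gt0 ?mulr_gt0 ?ltr_wpDl ?sumr_ge0 //.
  - rewrite ler_wpDr // (@le_sum_seq _ _ (fun c => 2 * k / r c)) //.
    by move=> i; rewrite divr_ge0 ?mulr_ge0 // ltW.
  - by move=> i _; rewrite divr_ge0 ?mulr_ge0 // ltW.
have n2lt : forall (c y : 'rV[R]_p) (e : R), `|y - c| < e / k -> norm2 (y - c) < e.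
  move=> c y e h; apply: (le_lt_trans (norm2_le_mxnorm _)).
  by rewrite mulrC -ltr_pdivlMr.
split.
- move=> y z yA zy; have [c [cD cy dc]] := key y yA.
  have hyc : norm2 (y - c) < r c.
    apply: (n2lt); rewrite distrC (lt_le_trans cy) //.
    have e : r c / (2 * k) = (r c / k) / 2 by field; rewrite gt_eqF.
    have : 0 < r c / k by rewrite divr_gt0.
    rewrite e; lra.
  have hzc : norm2 (z - c) < r c.
    apply: (n2lt); rewrite -(subrKA y) (le_lt_trans (ler_normD _ _)) //.
    have -> : r c / k = r c / (2 * k) + r c / (2 * k).
      by field; rewrite gt_eqF.
    by rewrite ltrD // ?(lt_le_trans zy dc) // distrC.
  have h := hL c z y hzc hyc.
  rewrite -!norm2_sq (le_trans (sq_le (norm2_ge0 _) h)) // exprMn.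
  rewrite ler_wpM2r ?sqr_ge0 //.
  by apply: (@le_sum_seq _ _ (fun c => Lf c ^+ 2)) => // i; rewrite sqr_ge0.
- move=> y yA; have [c [cD cy dc]] := key y yA.
  have hyc : norm2 (y - c) < r c.
    apply: (n2lt); rewrite distrC (lt_le_trans cy) //.
    have e : r c / (2 * k) = (r c / k) / 2 by field; rewrite gt_eqF.
    have : 0 < r c / k by rewrite divr_gt0.
    rewrite e; lra.
  have hcc : norm2 (c - c) < r c.
    by apply: (n2lt); rewrite subrr normr0 divr_gt0.
  have h := hL c y c hyc hcc.
  have -> : G y = G c + (G y - G c) by rewrite addrC subrK.
  apply: (le_trans (nsqD _ _)).
  apply: (@le_trans _ _ (2 * nsq (G c) + 2 * (Lf c ^+ 2 * r c ^+ 2))); last first.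
    apply: (@le_sum_seq _ _ (fun c => 2 * nsq (G c) + 2 * (Lf c ^+ 2 * r c ^+ 2))) => // i.
    by have := nsq_ge0 (G i); have := sqr_ge0 (Lf i); have := sqr_ge0 (r i); nra.
  rewrite lerD2l ler_pM2l //.
  rewrite -norm2_sq (le_trans (sq_le (norm2_ge0 _) h)) // exprMn.
  rewrite ler_wpM2l ?sqr_ge0 //.
  by apply: sq_le; [exact: norm2_ge0 | exact: ltW].
Unshelve. all: by end_near. Qed.

Lemma mvt_seg (F : 'rV[R]_p -> R) (G : 'rV[R]_p -> 'rV[R]_p) x dd :
  is_gradient F G -> exists2 c : R, 0 <= c <= 1 &
    F (x + dd) - F x = dotv (G (x + c *: dd)) dd.
Proof.
move=> hF.
pose g : R -> 'rV[R]_p := cst x + ( *:%R^~ dd).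
have gE : forall t, g t = x + t *: dd by [].
have hgd : forall t, is_diff t g (0 + *:%R^~ dd).
  move=> t; exact: is_diffD.
have dg : forall t, differentiable g t by move=> t; exact: ex_diff.
pose phi := F \o g.
have dphi : forall t, differentiable phi t.
  by move=> t; apply: differentiable_comp => //; exact: (hF (g t)).1.
have hder : forall t : R, is_derive t (1 : R) phi (dotv (G (x + t *: dd)) dd).
  move=> t; apply: DeriveDef; first exact: diff_derivable.
  rewrite deriveE // diff_comp //=; last exact: (hF (g t)).1.
  have hv := hgd t; rewrite diff_val /= (hF (g t)).2 gE; congr dotv.
  by rewrite /= add0r scale1r.
have cont : ({within `[(0:R), 1], continuous phi})%classic.
  apply: derivable_within_continuous => t _; exact: diff_derivable.
have [c c01 hc] := MVT_segment ler01 (fun t _ => hder t) cont.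
exists c; first by move: c01; rewrite in_itv.
move: hc; rewrite /phi /= !gE scale1r scale0r addr0 subr0 mulr1 => ->.
by [].
Qed.


Lemma descent (F : 'rV[R]_p -> R) (G : 'rV[R]_p -> 'rV[R]_p) (R1 : R) :
  is_gradient F G -> locally_lipschitz G ->
  exists K, 0 <= K /\ forall x y, `|x| <= R1 -> `|y| <= R1 ->
    F y - F x - dotv (G x) (y - x) <= K * nsq (y - x).
Proof.
move=> hF hG.
have [d [d0 [L [L0 [Gm [Gm0 [hL hGm]]]]]]] := cover_lemma R1 hG.
exists (L + 1 + 2 * Gm / d ^+ 2); split.
  apply: addr_ge0; [apply: addr_ge0 =>//|]; apply: divr_ge0; rewrite ?sqr_ge0 ?mulr_ge0 //.
move=> x y xA yA.
set dd := y - x.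
have [c /andP[c0 c1] hc] := mvt_seg x dd hF.
have ydd : x + dd = y by rewrite /dd addrC subrK.
rewrite ydd in hc; rewrite hc -dotvBl.
set z := x + c *: dd.
have zA : `|z| <= R1.
  have -> : z = (1 - c) *: x + c *: y.
    by rewrite /z /dd scalerBr scalerBl scale1r addrA addrAC.
  rewrite (le_trans (ler_normD _ _)) // !normrZ !ger0_norm ?subr_ge0 //.
  have : (1 - c) * `|x| <= (1 - c) * R1 by rewrite ler_wpM2l ?subr_ge0.
  have : c * `|y| <= c * R1 by rewrite ler_wpM2l.
  lra.
have hd0 := nsq_ge0 dd.
apply: (le_trans (dot_amgm _ _ ltr01)).
have e1 : (2 * 1)^-1 = 1 / 2 :> R by rewrite mulr1 div1r.
rewrite e1.
have hGd : nsq (G z - G x) <= 4 * Gm.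
  apply: (le_trans (nsqD _ _)); rewrite nsqN.
  have := hGm z zA; have := hGm x xA; lra.
have [small|big] := ltP `|dd| d.
- have zx : z - x = c *: dd by rewrite /z addrC addKr.
  have hz : `|z - x| < d.
    rewrite zx normrZ ger0_norm // (le_lt_trans _ small) //.
    have : 0 <= `|dd| by []. 
    nra.
  have := hL x z xA hz; rewrite zx nsqZ => h.
  have : c ^+ 2 * nsq dd <= nsq dd.
    have : c ^+ 2 <= 1 by rewrite expr_le1.
    nra.
  have : 0 <= 2 * Gm / d ^+ 2 by apply: divr_ge0; rewrite ?sqr_ge0 ?mulr_ge0.
  nra.
- have hb : d ^+ 2 <= nsq dd.
    rewrite -norm2_sq; apply: sq_le; first exact: ltW.
    exact: (le_trans big (mxnorm_le_norm2 _)).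
  have hq : 2 * Gm <= 2 * Gm / d ^+ 2 * nsq dd.
    have q : 1 <= nsq dd / d ^+ 2 by rewrite ler_pdivlMr ?exprn_gt0 // mul1r.
    have -> : 2 * Gm / d ^+ 2 * nsq dd = 2 * Gm * (nsq dd / d ^+ 2).
      by rewrite [nsq dd / _]mulrC mulrA.
    nra.
  have : 0 <= L * nsq dd by rewrite mulr_ge0.
  lra.
Qed.

End Basics.

Lemma dotvv (R : realType) (p : nat) (u : 'rV[R]_p) : dotv u u = nsq u.
Proof. by apply: eq_bigr => i _; rewrite expr2. Qed.

Unset Implicit Arguments.
Set Strict Implicit.

Theorem lemma3p1 (R : realType) (p : nat) (F : 'rV[R]_p -> R) (Flb : R)
    (Fdot : 'rV[R]_p -> 'rV[R]_p) (M : nat -> 'M[R]_p) (x : nat -> 'rV[R]_p) :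
  (forall y, Flb <= F y) ->
  is_gradient F Fdot ->
  locally_lipschitz Fdot ->
  (forall k, spd (M k)) ->
  (forall k, x k.+1 = x k - Fdot (x k) *m M k) ->
  forall Rad : R, 0 <= Rad ->
  exists C : R, 0 < C /\ forall k : nat,
    (F (x k.+1) - Flb) * chi x k.+1 0 Rad <=
    (F (x k) - Flb - dotv (Fdot (x k) *m M k) (Fdot (x k))
       + C * norm2 (Fdot (x k) *m M k) ^+ 2) * chi x k 0 Rad.
Proof.
move=> hlb hF hG _ hx Rad Rad0.
set R1 := Rad + 1.
have [K [K0 hK]] := descent R1 hF hG.
have [d [d0 [L [L0 [Gm [Gm0 [_ hGm]]]]]]] := cover_lemma R1 hG.
set s := ((Gm + 1) * (2 * K + 1))^-1.
have s0 : 0 < s by rewrite /s invr_gt0 mulr_gt0 // ltr_wpDl // mulr_ge0.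
have hsK : s * (2 * K + 1) <= 1.
  have -> : s * (2 * K + 1) = (Gm + 1)^-1.
    by rewrite /s; field; rewrite !gt_eqF // ltr_wpDl // mulr_ge0.
  by rewrite invf_le1 ?lerDr // ltr_wpDl.
have hsG : s * (Gm + 1) <= 1.
  have -> : s * (Gm + 1) = (2 * K + 1)^-1.
    by rewrite /s; field; rewrite !gt_eqF // ltr_wpDl // mulr_ge0.
  by rewrite invf_le1 ?lerDr ?mulr_ge0 // ltr_wpDl // mulr_ge0.
set A := (2 * s)^-1.
have A0 : 0 <= A by rewrite /A invr_ge0 mulr_ge0 // ltW.
set C := K + A + 1.
exists C; split; first by rewrite /C ltr_wpDl // addr_ge0.
have case2 : forall (y : 'rV[R]_p) (Mk : 'M[R]_p), `|y| <= Rad ->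
    0 <= F y - Flb - dotv (Fdot y *m Mk) (Fdot y) + C * norm2 (Fdot y *m Mk) ^+ 2.
  move=> y Mk yR.
  set g := Fdot y; set u := g *m Mk.
  have yA : `|y| <= R1 by rewrite /R1 (le_trans yR) // lerDl.
  have hg := hGm y yA.
  have ng : `|g| <= Gm + 1.
    apply: (le_trans (mxnorm_le_norm2 _)).
    have := norm2_sq g; have := norm2_ge0 g; move: hg; rewrite /g; nra.
  set y' := y - s *: g.
  have y'A : `|y'| <= R1.
    rewrite /y' (le_trans (ler_normB _ _)) // normrZ ger0_norm ?(ltW s0) //.
    have : s * `|g| <= s * (Gm + 1) by rewrite ler_wpM2l // ltW.
    rewrite /R1; lra.
  have := hK y y' yA y'A.
  have -> : y' - y = - (s *: g) by rewrite /y' addrAC subrr add0r.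
  rewrite dotvNr dotvZr dotvv nsqN nsqZ.
  have := hlb y'.
  have hn := nsq_ge0 g.
  have hsK2 : K * s ^+ 2 * nsq g <= s / 2 * nsq g.
    have hKs : K * s <= 1 / 2 by move: hsK; nra.
    have sn : 0 <= s * nsq g by rewrite mulr_ge0 // ltW.
    have -> : K * s ^+ 2 * nsq g = (K * s) * (s * nsq g) by rewrite expr2 !mulrA.
    have -> : s / 2 * nsq g = 1 / 2 * (s * nsq g) by rewrite mulrC !mulrA mulrC; field.
    by apply: ler_wpM2r.
  have am := dot_amgm u g s0.
  rewrite -/A in am.
  have hu := nsq_ge0 u.
  rewrite norm2_sq /C !mulrDl mul1r.
  have : 0 <= K * nsq u by rewrite mulr_ge0.
  move: hsK2 am; set a1 := K * s ^+ 2 * nsq g; set a2 := s / 2 * nsq g; set a3 := A * nsq u.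
  set a4 := s * nsq g. 
  have e : a4 = 2 * a2 by rewrite /a4 /a2; field.
  rewrite dotvC.
  rewrite [K * (_ * _)]mulrA -/a1; lra.
move=> k.
rewrite /chi; case: ifP => H1; case: ifP => H0; rewrite ?mulr1 ?mulr0 //.
- have hk1 := forallP H1 ord_max; rewrite /= subr0 in hk1.
  have hk0 := forallP H1 (inord k); rewrite /= inordK // subr0 in hk0.
  have yA : `|x k| <= R1.
    by rewrite /R1 (le_trans (mxnorm_le_norm2 _)) // (le_trans hk0) // lerDl.
  have y'A : `|x k.+1| <= R1.
    by rewrite /R1 (le_trans (mxnorm_le_norm2 _)) // (le_trans hk1) // lerDl.
  have := hK _ _ yA y'A.
  rewrite !hx.
  have -> : x k - Fdot (x k) *m M k - x k = - (Fdot (x k) *m M k) by rewrite addrAC subrr add0r.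
  rewrite dotvNr nsqN norm2_sq dotvC /C !mulrDl mul1r.
  have := nsq_ge0 (Fdot (x k) *m M k) => hu.
  have : 0 <= A * nsq (Fdot (x k) *m M k) by rewrite mulr_ge0.
  lra.
- exfalso; move/negbT: H0 => /negP; apply; apply/forallP => j.
  have := forallP H1 (widen_ord (leqnSn _) j); by [].
- have hk0 := forallP H0 ord_max; rewrite /= subr0 in hk0.
  have h := case2 (x k) (M k) (le_trans (mxnorm_le_norm2 _) hk0).
  by [].
Qed.
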